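(* Let $n\geq 4$ and $G\in\mathcal{GAQ}_n$. Let $(a,b)$ be an edge of $G$, let $A$ be the set of neighbors of $a$ and $B$ the set of neighbors of $b$. Then $A\setminus\{b\}\neq B\setminus\{a\}$.
   Context: The $n$-dimensional augmented cube $AQ_n$ ($n\geq 1$) has vertex set all binary strings $u_1u_2\cdots u_n$. $AQ_1\cong K_2$ on vertices $0,1$. For $n\geq 2$, $AQ_n$ consists of a copy $AQ^0_{n-1}$ of $AQ_{n-1}$ with $0$ prefixed to every label and a copy $AQ^1_{n-1}$ with $1$ prefixed, plus the following edges: $0u_1\cdots u_{n-1}$ is adjacent to $1v_1\cdots v_{n-1}$ iff either $u_i=v_i$ for all $i$ (cross edge) or $u_i\neq v_i$ for all $i$ (complement edge). $AQ_n$ is $(2n-1)$-regular. Generalized augmented cubes: $\mathcal{GAQ}_4=\{AQ_4\}$; for $n\geq 5$, $\mathcal{GAQ}_n$ consists of all graphs $(V_1\cup V_2, E_1\cup E_2\cup M_1\cup M_2)$ where $(V_1,E_1),(V_2,E_2)$ are (vertex-disjoint copies of, possibly identical) graphs in $\mathcal{GAQ}_{n-1}$ and $M_1,M_2$ are edge-disjoint perfect matchings between $V_1$ and $V_2$. A generalized augmented cube is a graph in $\mathcal{GAQ}_n$ for some $n\geq 4$. *)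

(* Defs.v *)
(* Vertices of graphs in GAQ_n are labelled by bit strings
   n.-tuple bool; a graph is its adjacency relation. *)
From HB Require Import structures.
From mathcomp Require Import all_boot fingroup perm.
Set Implicit Arguments. Unset Strict Implicit. Unset Printing Implicit Defensive.

(* Adjacency in the augmented cube AQ_n, on bit strings of length n >= 1.
   AQ_1 = K_2; for n >= 2, b::s ~ c::t iff (b = c and s ~ t in AQ_{n-1})
   or (b <> c and (s = t (cross edge) or s, t differ in every bit
   (complement edge))). *)
Fixpoint aq (s t : seq bool) : bool :=
  match s, t with
  | [:: b], [:: c] => b != c
  | b :: s', c :: t' =>
      if b == c then aq s' t' else (s' == t') || (t' == map negb s')
  | _, _ => false
  end.

Definition AQ (n : nat) : rel (n.-tuple bool) := fun u v => aq u v.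

(* The graph (V1 u V2, E1 u E2 u M1 u M2): V1 = strings with first bit 0
   (a copy of G1), V2 = strings with first bit 1 (a copy of G2),
   M_i = { {0u, 1 (f_i u)} } the perfect matching given by the bijection f_i. *)
Definition gaq_join (n : nat) (G1 G2 : rel (n.-tuple bool))
  (f1 f2 : {perm n.-tuple bool}) : rel (n.+1.-tuple bool) :=
  fun x y =>
    let u := behead_tuple x in let v := behead_tuple y in
    match thead x, thead y with
    | false, false => G1 u v
    | true, true => G2 u v
    | false, true => (v == f1 u) || (v == f2 u)
    | true, false => (u == f1 v) || (u == f2 v)
    end.

Unset Implicit Arguments.
Inductive GAQ : forall n : nat, (rel (n.-tuple bool)) -> Prop :=
  | GAQ_base : GAQ 4 (@AQ 4)
  | GAQ_step (n : nat) (G1 G2 : rel (n.-tuple bool))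
      (f1 f2 : {perm n.-tuple bool}) :
      GAQ n G1 -> GAQ n G2 ->
      (forall u, f1 u != f2 u) ->   (* M1, M2 edge-disjoint *)
      GAQ n.+1 (gaq_join G1 G2 f1 f2).

(* Main.v *)
Require Import Defs.
From mathcomp Require Import all_boot fingroup perm.
Set Implicit Arguments. Unset Strict Implicit.

Definition all4 : seq (seq bool) :=
  [seq [:: odd (i %/ 8); odd (i %/ 4); odd (i %/ 2); odd i] | i <- iota 0 16].

Lemma all4_size : all (fun x => size x == 4) all4.
Proof. by []. Qed.

Lemma all4_mem (u : 4.-tuple bool) : val u \in all4.
Proof.
case: u => [[|a [|b [|c [|d [|e s]]]]] //= _].
by case: a; case: b; case: c; case: d.
Qed.

Lemma all4_check : all (fun a => all (fun b => ~~ aq a b ||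
   has (fun x => (aq a x && (x != b)) != (aq b x && (x != a))) all4) all4) all4.
Proof. by vm_compute. Qed.

Lemma base_main (a b : 4.-tuple bool) : AQ a b ->
  exists x, (AQ a x && (x != b)) != (AQ b x && (x != a)).
Proof.
move=> ab.
have := all4_check; move/allP/(_ _ (all4_mem a))/allP/(_ _ (all4_mem b)).
have ab' : aq a b := ab. rewrite ab'. case/orP => [/negP[]//|/hasP [x xin H]].
have sx : size x == 4 by move/allP: all4_size => /(_ _ xin).
by exists (Tuple sx).
Qed.

Lemma base_deg (u : 4.-tuple bool) :
  exists x y, [/\ x != y, AQ u x & AQ u y].
Proof.
case: u => [[|a [|b [|c [|d [|e s]]]]] //= su].
exists [tuple ~~ a; b; c; d], [tuple ~~ a; ~~ b; ~~ c; ~~ d].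
by move: su; case: a; case: b; case: c; case: d => su; split; vm_compute.
Qed.

Lemma bh_cons n (h : bool) (u : n.-tuple bool) :
  behead_tuple (cons_tuple h u) = u.
Proof. by apply: val_inj. Qed.

Lemma joinE n (G1 G2 : rel (n.-tuple bool)) (f1 f2 : {perm n.-tuple bool}) (h h' : bool) (u v : n.-tuple bool) :
  gaq_join G1 G2 f1 f2 (cons_tuple h u) (cons_tuple h' v) =
  match h, h' with
  | false, false => G1 u v
  | true, true => G2 u v
  | false, true => (v == f1 u) || (v == f2 u)
  | true, false => (u == f1 v) || (u == f2 v)
  end.
Proof. by rewrite /gaq_join !theadE !bh_cons. Qed.

Lemma tup_dec n (x : n.+1.-tuple bool) : exists h u, x = cons_tuple h u.
Proof. by exists (thead x), (behead_tuple x); rewrite {1}(tuple_eta x). Qed.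

Lemma cons_inj n (h h' : bool) (u v : n.-tuple bool) :
  (cons_tuple h u == cons_tuple h' v) = (h == h') && (u == v).
Proof.
apply/eqP/andP => [E|[/eqP -> /eqP ->] //].
have := congr1 val E => /= [[-> /val_inj ->]]; by split.
Qed.

Definition degP n (G : rel (n.-tuple bool)) :=
  forall u, exists x y, [/\ x != y, G u x & G u y].

Definition mainP n (G : rel (n.-tuple bool)) :=
  forall a b, G a b -> exists x, (G a x && (x != b)) != (G b x && (x != a)).

Lemma deg_step n (G1 G2 : rel (n.-tuple bool)) (f1 f2 : {perm n.-tuple bool}) :
  degP G1 -> degP G2 -> degP (gaq_join G1 G2 f1 f2).
Proof.
move=> d1 d2 x; have [h [u ->]] := tup_dec x.
case: h.
- have [p [q [pq Hp Hq]]] := d2 u.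
  by exists (cons_tuple true p), (cons_tuple true q); rewrite !joinE cons_inj.
- have [p [q [pq Hp Hq]]] := d1 u.
  by exists (cons_tuple false p), (cons_tuple false q); rewrite !joinE cons_inj.
Qed.

Lemma three (T : eqType) (a b p q u : T) :
  (p == a) || (p == b) -> (q == a) || (q == b) -> (u == a) || (u == b) ->
  p != q -> p != u -> q != u -> False.
Proof.
by do 3!case/orP=> /eqP->; rewrite ?eqxx.
Qed.

Lemma main_step n (G1 G2 : rel (n.-tuple bool)) (f1 f2 : {perm n.-tuple bool}) :
  mainP G1 -> mainP G2 -> degP G2 -> mainP (gaq_join G1 G2 f1 f2).
Proof.
move=> m1 m2 d2 a b.
have [ha [u ->]] := tup_dec a; have [hb [v ->]] := tup_dec b.
case: ha; case: hb; rewrite joinE => Hab.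
- have [x Hx] := m2 _ _ Hab.
  by exists (cons_tuple true x); rewrite !joinE !cons_inj.
- apply/existsP; apply: contraT; rewrite negb_exists => /forallP H.
  have [p [q [pq Hp Hq]]] := d2 u.
  have := H (cons_tuple true p); have := H (cons_tuple true q).
  rewrite !joinE !cons_inj /= Hp Hq /= !negbK => /eqP Eq /eqP Ep.
  move: Eq Ep Hab pq.
  move=> /esym/andP[Eq1 Eq2] /esym/andP[Ep1 Ep2] Hu pq.
  by case: (three Ep1 Eq1 Hu pq Ep2 Eq2).
- apply/existsP; apply: contraT; rewrite negb_exists => /forallP H.
  have [p [q [pq Hp Hq]]] := d2 v.
  have := H (cons_tuple true p); have := H (cons_tuple true q).
  rewrite !joinE !cons_inj /= Hp Hq /= !negbK => /eqP Eq /eqP Ep.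
  move: Eq Ep Hab pq.
  move=> /andP[Eq1 Eq2] /andP[Ep1 Ep2] Hu pq.
  by case: (three Ep1 Eq1 Hu pq Ep2 Eq2).
- have [x Hx] := m1 _ _ Hab.
  by exists (cons_tuple false x); rewrite !joinE !cons_inj.
Qed.

Lemma gaq_props n (G : rel (n.-tuple bool)) : GAQ n G -> mainP G /\ degP G.
Proof.
elim=> [|m G1 G2 f1 f2 _ [m1 d1] _ [m2 d2] _].
- by split; [exact: base_main | exact: base_deg].
- by split; [exact: main_step | exact: deg_step].
Qed.

Theorem lemma3p1 (n : nat) (G : rel (n.-tuple bool)) :
  4 <= n -> GAQ n G ->
  forall a b : n.-tuple bool, G a b ->
  [set x | G a x] :\ b != [set x | G b x] :\ a.
Proof.
move=> _ HG a b Hab.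
have [x Hx] := (gaq_props HG).1 a b Hab.
apply/negP => /eqP E; move: Hx.
have Ex : (x \in [set x | G a x] :\ b) = (x \in [set x | G b x] :\ a) by rewrite E.
by move: Ex; rewrite !in_setD1 !inE andbC [X in _ = X -> _]andbC => ->; rewrite eqxx.
Qed.
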